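(* Let $F$ be an infinite field, $R$ a finite-dimensional associative unital $F$-algebra and $J$ its Jacobson radical. Then the multiplicative polynomial functions $f:R\to F$ are induced by the polynomial characters of the unit group $(R/J)^\star$: every such $f$ restricted to $R^\star$ is a character of $R^\star$ that is trivial on $1+J$, hence factors through a polynomial character of $(R/J)^\star=R^\star/(1+J)$, and $f$ is determined by this character.
   Context: A polynomial function $f:R\to F$ is multiplicative if $f(ab)=f(a)f(b)$ for all $a,b\in R$. $R^\star$ denotes the group of invertible elements of $R$; a character of an algebraic group is an algebraic group homomorphism to $F^\star$, and a polynomial character of $(R/J)^\star$ is one given by (the restriction of) a polynomial function on $R/J$. *)

(* Defs.v *)
From HB Require Import structures.
From mathcomp Require Import all_boot all_order all_algebra all_field.
From mathcomp Require Import mpoly.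
Set Implicit Arguments. Unset Strict Implicit. Unset Printing Implicit Defensive.
Import GRing.Theory.
Local Open Scope ring_scope.

Definition infinite_type (T : eqType) : Prop := forall s : seq T, exists x : T, x \notin s.

(* Polynomial function on a finite-dimensional F-vector space V: a polynomial in
   the coordinates w.r.t. a basis (any basis gives the same notion). *)
Definition polyfun (F : fieldType) (V : vectType F) (f : V -> F) : Prop :=
  exists p : {mpoly F[\dim (fullv : {vspace V})]},
    forall v : V, f v = p.@[fun i => coord (vbasis fullv) i v].

Definition multiplicative_fun (F : fieldType) (R : falgType F) (f : R -> F) : Prop :=
  forall a b : R, f (a * b) = f a * f b.

Definition left_ideal (F : fieldType) (R : falgType F) (I : {vspace R}) : Prop :=
  forall r x : R, x \in I -> r * x \in I.

Definition maximal_left_ideal (F : fieldType) (R : falgType F) (I : {vspace R}) : Prop :=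
  [/\ left_ideal I, (1 : R) \notin I &
      forall I' : {vspace R}, left_ideal I' -> (1 : R) \notin I' -> (I <= I')%VS -> I' = I].

Definition jacobson (F : fieldType) (R : falgType F) (x : R) : Prop :=
  forall I : {vspace R}, maximal_left_ideal I -> x \in I.

(* Main.v *)
Require Import Defs.
From HB Require Import structures.
From mathcomp Require Import all_boot all_order all_algebra all_field.
From mathcomp Require Import mpoly.
From Stdlib Require Import Classical FunctionalExtensionality.
From mathcomp Require Import zify.
Set Implicit Arguments. Unset Strict Implicit. Unset Printing Implicit Defensive.
Import GRing.Theory.
Local Open Scope ring_scope.

Section Aux.
Variable F : fieldType.
Hypothesis infF : infinite_type F.

Lemma uniq_seq_n n : exists s : seq F, uniq s /\ size s = n.
Proof.
elim: n => [|n [s [us ss]]]; first by exists [::].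
have [x xs] := infF s; exists (x :: s); by rewrite /= xs us ss.
Qed.

Lemma poly_eq0_inf (P : {poly F}) : (forall t, P.[t] = 0) -> P = 0.
Proof.
move=> H; have [s [us ss]] := uniq_seq_n (size P).
apply: (roots_geq_poly_eq0 (rs := s)) => //; last by rewrite ss.
by apply/allP => t _; apply/rootP.
Qed.

Lemma poly_eq0_cofin (P q : {poly F}) : q != 0 ->
  (forall t, q.[t] != 0 -> P.[t] = 0) -> P = 0.
Proof.
move=> q0 H; have : P * q = 0.
  apply: poly_eq0_inf => t; rewrite hornerM.
  by have [->|/H->] := eqVneq q.[t] 0; rewrite ?mulr0 ?mul0r.
by move/eqP; rewrite mulf_eq0 (negbTE q0) orbF => /eqP.
Qed.
End Aux.

Section Annih.
Variables (F : fieldType) (R : falgType F).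

Lemma annih_poly (x : R) : exists q : {poly F}, q != 0 /\ horner_alg x q = 0.
Proof.
pose n := \dim {: R}.
pose X := [tuple x ^+ i | i < n.+1].
have nf : ~~ free X.
  rewrite /free size_tuple; apply/negP => /eqP E.
  have := dimvS (subvf <<X>>); rewrite E /= -/n; by rewrite ltnn.
have [k [Hk [i Hi]]] : exists k : 'I_n.+1 -> F, \sum_(i < n.+1) k i *: X`_i = 0 /\ exists i, k i != 0.
  apply: NNPP => Hn; apply: (negP nf); apply/freeP => k Hs i.
  apply: NNPP => Hki; apply: Hn; exists k; split => //; exists i; exact/eqP.
exists (\poly_(j < n.+1) k (inord j)); split.
  apply/eqP => /(congr1 (fun p : {poly F} => p`_i)); rewrite coef_poly ltn_ord coef0 inord_val.
  exact/eqP.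
rewrite poly_def linear_sum /=; rewrite -[RHS]Hk; apply: eq_bigr => j _; rewrite inord_val.
by rewrite linearZ /= rmorphXn /= horner_algX mulr_algl (nth_map j) ?size_enum_ord // nth_ord_enum.
Qed.


Lemma unit_cofin (x : R) : exists Q : {poly F}, Q != 0 /\
  forall t, Q.[t] != 0 -> exists w, w * (x + t%:A) = 1 /\ (x + t%:A) * w = 1.
Proof.
have [q [q0 hq]] := annih_poly x.
exists (q \Po (- 'X)); split.
  by rewrite comp_poly2_eq0 // size_polyN size_polyX.
move=> t; rewrite horner_comp hornerN hornerX => ct.
set c := q.[-t] in ct *.
have : root (q - c%:P) (-t) by rewrite /root hornerD hornerN hornerC subrr.
case/factor_theorem => r Er.
have E1 : horner_alg x r * (x + t%:A) = - c%:A.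
  have := congr1 (horner_alg x) Er.
  rewrite rmorphB /= hq horner_algC sub0r rmorphM /= rmorphB /= horner_algX horner_algC.
  by rewrite scaleNr opprK => <-.
have E2 : (x + t%:A) * horner_alg x r = - c%:A.
  rewrite -E1; have := congr1 (horner_alg x) (mulrC r ('X + t%:P)).
  by rewrite !rmorphM /= rmorphD /= horner_algX horner_algC.
exists (- c^-1 *: horner_alg x r); split.
    by rewrite -scalerAl E1 scalerN scaleNr opprK scalerA mulVf // scale1r.
by rewrite -scalerAr E2 scalerN scaleNr opprK scalerA mulVf // scale1r.
Qed.
End Annih.

Section Line.
Variables (F : fieldType) (R : falgType F).

Lemma polyfun_line (f : R -> F) : polyfun f -> forall a b : R,
  exists P : {poly F}, forall t, f (a + t *: b) = P.[t].
Proof.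
case=> p Hp a b.
pose c i := coord (vbasis (fullv : {vspace R})) i a.
pose d i := coord (vbasis (fullv : {vspace R})) i b.
exists (\sum_(m <- msupp p) (p@_m)%:P * \prod_i ((c i)%:P + (d i)%:P * 'X) ^+ m i).
move=> t; rewrite Hp mevalE -horner_evalE rmorph_sum /=; apply: eq_bigr => m _.
rewrite rmorphM /= horner_evalE hornerC rmorph_prod /=; congr (_ * _); apply: eq_bigr => i _.
by rewrite rmorphXn /= horner_evalE hornerD hornerC hornerMX hornerC linearD linearZ /= mulrC.
Qed.
End Line.

Section Nil.
Variables (F : fieldType) (R : falgType F) (f : R -> F).
Hypotheses (infF : infinite_type F) (pf : polyfun f) (mf : multiplicative_fun f) (f1 : f 1 = 1).

Lemma hom_poly_const (H : {poly F}) : (forall s t, H.[s] * H.[t] = H.[s + t]) ->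
  H.[0] = 1 -> forall t, H.[t] = 1.
Proof.
move=> Hm H0.
have E : H * (H \Po (- 'X)) = 1.
  apply/eqP; rewrite -subr_eq0; apply/eqP; apply: poly_eq0_inf => // t.
  by rewrite hornerD hornerN hornerM horner_comp hornerN hornerX hornerC Hm subrr H0 subrr.
have Hn0 : H != 0 by apply/eqP => HH; move: H0; rewrite HH horner0 => /eqP; rewrite eq_sym oner_eq0.
have Hc0 : H \Po (- 'X) != 0 by rewrite comp_poly2_eq0 // size_polyN size_polyX.
have : size (H * (H \Po (- 'X))) = 1%N by rewrite E size_poly1.
rewrite size_mul // size_comp_poly2 ?size_polyN ?size_polyX //.
move=> Es; have sH : (size H <= 1)%N.
  by move: Es; set z := size H; clear; lia.
move=> t; by rewrite -H0 (size1_polyC sH) !hornerC.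
Qed.

Lemma geom_sum (y : R) n : (1 - y) * \sum_(i < n) y ^+ i = 1 - y ^+ n.
Proof.
elim: n => [|n IH]; first by rewrite big_ord0 mulr0 expr0 subrr.
rewrite big_ord_recr /= mulrDr IH mulrBl mul1r -exprS.
by rewrite addrA subrK.
Qed.

Lemma nil_f m (j : R) : j ^+ m = 0 -> f (1 + j) = 1.
Proof.
elim: m j => [|m IH] j.
  by rewrite expr0 => /eqP; rewrite oner_eq0.
case: m IH => [|m] IH.
  by rewrite expr1 => ->; rewrite addr0.
move=> jm.
have [H HH] := polyfun_line pf 1 j.
have Hm : forall s t, H.[s] * H.[t] = H.[s + t].
  move=> s t; rewrite -!HH -mf.
  pose a := (s + t) *: j.
  pose v := \sum_(i < m.+2) (- a) ^+ i.
  have av : (1 + a) * v = 1.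
    rewrite -[a]opprK geom_sum -scaleNr exprZn jm scaler0 subr0 //.
  have cjv : GRing.comm j v.
    apply: commr_sum => i _; apply: commrX; apply: commrN.
    by rewrite /GRing.comm /a -scalerAl -scalerAr.
  pose k := v * ((s * t) *: (j * j)).
  have E : (1 + s *: j) * (1 + t *: j) = (1 + a) * (1 + k).
    rewrite /k [RHS]mulrDr mulr1 [in RHS]mulrA av mul1r !mulrDl !mulrDr !mul1r !mulr1.
    rewrite -scalerAl -scalerAr scalerA /a scalerDl !addrA; congr (_ + _).
    by rewrite -!addrA [t *: j + _]addrC.
  have km : k ^+ m.+1 = 0.
    rewrite /k exprMn_comm; last first.
      apply: commr_sym; rewrite /GRing.comm -scalerAl -scalerAr.
      by rewrite -mulrA cjv mulrA cjv -mulrA.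
    rewrite exprZn [(j * j) ^+ _]exprMn_comm // -exprD.
    have -> : (m.+1 + m.+1 = m.+2 + m)%N by lia.
    by rewrite exprD jm mul0r scaler0 mulr0.
  by rewrite E mf (IH _ km) mulr1 HH.
have H0 : H.[0] = 1 by rewrite -HH scale0r addr0.
by rewrite -(scale1r j) HH (hom_poly_const Hm H0).
Qed.
End Nil.

Section Jac.
Variables (F : fieldType) (R : falgType F).

Lemma amulrE' (a u : R) : amulr a u = u * a.
Proof. by rewrite lfunE. Qed.

Lemma jac_left (r x : R) : jacobson x -> jacobson (r * x).
Proof. by move=> Jx I mI; case: (mI) => li _ _; apply: li; exact: Jx. Qed.

Lemma exists_max (L : {vspace R}) : left_ideal L -> (1 : R) \notin L ->
  exists I, maximal_left_ideal I /\ (L <= I)%VS.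
Proof.
have main : forall k (L : {vspace R}), (\dim {:R} - \dim L < k)%N -> left_ideal L ->
    (1 : R) \notin L -> exists I, maximal_left_ideal I /\ (L <= I)%VS.
  elim=> [//|k IH] L' hk li n1.
  case: (classic (maximal_left_ideal L')) => [mL|nmL].
    by exists L'; split => //; rewrite subvv.
  have [I' [li' [n1' [LI' neq]]]] : exists I' : {vspace R}, left_ideal I' /\ (1 : R) \notin I'
      /\ (L' <= I')%VS /\ I' <> L'.
    apply: NNPP => Hn; apply: nmL; split => // I' a b c; apply: NNPP => d; apply: Hn.
    by exists I'.
  have lt : ~~ (\dim I' <= \dim L')%N.
    by apply/negP => le; apply: neq; apply/eqP; rewrite eq_sym eqEdim LI' le.
  have hk' : (\dim {:R} - \dim I' < k)%N.
    by move: hk lt; have := dimvS (subvf I'); lia.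
  have [I [mI I'I]] := IH I' hk' li' n1'.
  exists I; split => //; exact: subv_trans LI' I'I.
by move=> li n1; apply: (main (\dim {:R} - \dim L).+1).
Qed.

Lemma jac_linv (x : R) : jacobson x -> exists y, y * (1 - x) = 1.
Proof.
move=> Jx; set L := limg (amulr (1 - x)).
have [/memv_imgP [u _ Hu]|n1] := boolP ((1 : R) \in L).
  by exists u; rewrite [RHS]Hu amulrE'.
have li : left_ideal L.
  move=> r z /memv_imgP [u _ ->]; rewrite !amulrE' mulrA.
  by have := memv_img (amulr (1 - x)) (memvf (r * u)); rewrite amulrE'.
have [I [mI LI]] := exists_max li n1.
case: (mI) => liI n1I _; case/negP: n1I.
have -> : (1 : R) = x + (1 - x) by rewrite addrC subrK.
apply: memvD; first exact: Jx.
apply: (subvP LI).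
by have := memv_img (amulr (1 - x)) (memvf 1); rewrite amulrE' mul1r.
Qed.

Lemma jac_nil (j : R) : jacobson j -> exists m, j ^+ m = 0.
Proof.
move=> Jj; pose V n := limg (amulr (j ^+ n)).
have sV : forall n, (V n.+1 <= V n)%VS.
  move=> n; apply/subvP => z /memv_imgP [u _ ->]; rewrite amulrE' exprS mulrA.
  by have := memv_img (amulr (j ^+ n)) (memvf (u * j)); rewrite amulrE'.
have [n hn] : exists n, (\dim (V n) <= \dim (V n.+1))%N.
  apply: NNPP => Hn.
  have dec : forall n, (\dim (V n) + n <= \dim (V 0))%N.
    elim=> [|n IH]; first by rewrite addn0.
    have : ~~ (\dim (V n) <= \dim (V n.+1))%N by apply/negP => h; apply: Hn; exists n.
    move: IH; lia.
  by move: (dec (\dim (V 0)).+1); rewrite addnS ltnNge leq_addl.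
have EV : V n.+1 == V n by rewrite eqEdim sV hn.
have : j ^+ n \in V n.+1.
  rewrite (eqP EV).
  by have := memv_img (amulr (j ^+ n)) (memvf 1); rewrite amulrE' mul1r.
case/memv_imgP => u _; rewrite amulrE' exprS mulrA => E.
have [y Hy] := jac_linv (jac_left u Jj).
exists n; rewrite -[j ^+ n]mul1r -Hy -mulrA mulrBl mul1r -E subrr mulr0 //.
Qed.
End Jac.

Section Main.
Variables (F : fieldType) (R : falgType F) (f : R -> F).
Hypotheses (infF : infinite_type F) (pf : polyfun f) (mf : multiplicative_fun f).
Hypothesis (nz : exists x : R, f x != 0).

Lemma f1 : f 1 = 1.
Proof.
have [x fx] := nz; apply/eqP; rewrite -subr_eq0.
have : f x * (f 1 - 1) = 0 by rewrite mulrBr -mf mulr1 mulr1 subrr.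
by move/eqP; rewrite mulf_eq0 (negbTE fx) /= => /eqP ->.
Qed.

Lemma f_unit (u : R) : u \is a GRing.unit -> f u != 0.
Proof.
move=> Uu; apply/eqP => fu0.
have : f (u * u^-1) = 1 by rewrite mulrV // f1.
by rewrite mf fu0 mul0r => /eqP; rewrite eq_sym oner_eq0.
Qed.

Lemma f_jac (j : R) : jacobson j -> f (1 + j) = 1.
Proof. by case/jac_nil => m jm; apply: (nil_f infF pf mf f1 jm). Qed.

Lemma f_shift (x j : R) : jacobson j -> f (x + j) = f x.
Proof.
move=> Jj; have [Q [Q0 HQ]] := unit_cofin x.
have [P1 HP1] := polyfun_line pf (x + j) 1.
have [P2 HP2] := polyfun_line pf x 1.
have E : P1 - P2 = 0.
  apply: (poly_eq0_cofin infF Q0) => t /HQ [w [w1 w2]].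
  rewrite hornerD hornerN -HP1 -HP2.
  have -> : x + j + t *: 1 = (x + t%:A) * (1 + w * j).
    by rewrite mulrDr mulr1 mulrA w2 mul1r addrAC.
  by rewrite mf f_jac ?mulr1 ?subrr //; apply: jac_left.
have : P1.[0] = P2.[0] by apply/eqP; rewrite -subr_eq0 -hornerN -hornerD E horner0.
by rewrite -HP1 -HP2 !scale0r !addr0.
Qed.

Lemma f_determined (f' : R -> F) : polyfun f' -> multiplicative_fun f' ->
  (forall u : R, u \is a GRing.unit -> f' u = f u) -> f' = f.
Proof.
move=> pf' mf' Hu; apply: functional_extensionality => x.
have [Q [Q0 HQ]] := unit_cofin x.
have [P1 HP1] := polyfun_line pf' x 1.
have [P2 HP2] := polyfun_line pf x 1.
have E : P1 - P2 = 0.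
  apply: (poly_eq0_cofin infF Q0) => t /HQ [w [w1 w2]].
  rewrite hornerD hornerN -HP1 -HP2 Hu ?subrr //.
  by apply/unitrP; exists w.
have : P1.[0] = P2.[0] by apply/eqP; rewrite -subr_eq0 -hornerN -hornerD E horner0.
by rewrite -HP1 -HP2 !scale0r !addr0.
Qed.

End Main.

Section Quot.
Variables (F : fieldType) (R : falgType F) (f : R -> F).
Hypotheses (infF : infinite_type F) (pf : polyfun f) (mf : multiplicative_fun f).
Hypothesis (nz : exists x : R, f x != 0).
Variables (S : falgType F) (pi : {lrmorphism R -> S}).
Hypotheses (surj : forall y : S, exists x : R, pi x = y)
           (ker : forall x : R, pi x = 0 <-> jacobson x).

Let eS := vbasis (fullv : {vspace S}).
Let eR := vbasis (fullv : {vspace R}).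
Let nS := \dim (fullv : {vspace S}).
Let nR := \dim (fullv : {vspace R}).

Lemma surjb (y : S) : exists x : R, pi x == y.
Proof. by have [x <-] := surj y; exists x. Qed.

Let rr (i : 'I_nS) : R := xchoose (surjb eS`_i).
Let sigma (y : S) : R := \sum_(i < nS) coord eS i y *: rr i.

Lemma pi_sigma y : pi (sigma y) = y.
Proof.
rewrite /sigma linear_sum /= [RHS](coord_vbasis (memvf y)); apply: eq_bigr => i _.
by rewrite linearZ /= (eqP (xchooseP (surjb eS`_i))).
Qed.

Lemma g_pi x : f (sigma (pi x)) = f x.
Proof.
have -> : sigma (pi x) = x + (sigma (pi x) - x) by rewrite addrC subrK.
apply: (f_shift infF pf mf nz); apply/ker.
by rewrite rmorphB /= pi_sigma subrr.
Qed.

Lemma g_poly : polyfun (fun y => f (sigma y)).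
Proof.
case: pf => p Hp.
pose lq := [tuple \sum_(k < nS) (coord eR i (rr k)) *: ('X_k : {mpoly F[nS]}) | i < nR].
exists (p \mPo lq) => y; rewrite Hp comp_mpoly_meval; apply: meval_eq => i.
rewrite tnth_mktuple raddf_sum /= /sigma linear_sum /=; apply: eq_bigr => k _.
by rewrite mevalZ mevalXU linearZ /= mulrC.
Qed.


Lemma quot_char : exists g : S -> F,
        [/\ polyfun g,
            (forall u v : S, u \is a GRing.unit -> v \is a GRing.unit -> g (u * v) = g u * g v),
            (forall u : S, u \is a GRing.unit -> g u != 0),
            (forall u : R, u \is a GRing.unit -> f u = g (pi u)) &
            (forall x : R, f x = g (pi x))].
Proof.
exists (fun y => f (sigma y)); split.
- exact: g_poly.
- move=> u v _ _; have [a <-] := surj u; have [b <-] := surj v.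
  by rewrite -rmorphM /= !g_pi mf.
- move=> u Uu; have [a Ea] := surj u; have [b Eb] := surj u^-1.
  have J : jacobson (a * b - 1) by apply/ker; rewrite rmorphB rmorphM /= Ea Eb mulrV // rmorph1 subrr.
  have := f_jac infF pf mf nz J; rewrite addrC subrK mf => H.
  rewrite -Ea g_pi; apply/eqP => fa0; move: H; rewrite fa0 mul0r => /eqP.
  by rewrite eq_sym oner_eq0.
- by move=> u _; rewrite g_pi.
- by move=> x; rewrite g_pi.
Qed.
End Quot.

Unset Implicit Arguments.
Set Strict Implicit.

Theorem lemma3p1 (F : fieldType) (R : falgType F) (f : R -> F) :
  infinite_type F ->
  polyfun f -> multiplicative_fun f -> (exists x : R, f x != 0) ->
  ((forall u : R, u \is a GRing.unit -> f u != 0) /\ f 1 = 1 /\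
   (forall j : R, jacobson j -> f (1 + j) = 1) /\
   (forall (S : falgType F) (pi : {lrmorphism R -> S}),
      (forall y : S, exists x : R, pi x = y) ->
      (forall x : R, pi x = 0 <-> jacobson x) ->
      exists g : S -> F,
        [/\ polyfun g,
            (forall u v : S, u \is a GRing.unit -> v \is a GRing.unit -> g (u * v) = g u * g v),
            (forall u : S, u \is a GRing.unit -> g u != 0),
            (forall u : R, u \is a GRing.unit -> f u = g (pi u)) &
            (forall x : R, f x = g (pi x))]) /\
   (forall f' : R -> F, polyfun f' -> multiplicative_fun f' ->
      (forall u : R, u \is a GRing.unit -> f' u = f u) -> f' = f)).
Proof.
move=> infF pf mf nz; split; first exact: f_unit.
split; first exact: f1.
split; first exact: f_jac.
split; first by move=> S pi surj ker; exact: quot_char.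
exact: f_determined.
Qed.
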